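(* Let $\Omega$ be as in the context and suppose $\Omega$ is nonempty and bounded, $0\notin\Omega$, and $\Omega\cap\mathcal{R}\neq\emptyset$. Consider $$\text{(P)}\quad \min\{\langle\overline{C},Y\rangle : Y\in\Omega\cap\mathcal{R}\}\qquad\text{and}\qquad \text{(P}_\rho)\quad \min\{\langle\overline{C},Y\rangle+\rho\operatorname{rank}(Y) : Y\in\Omega\}.$$ Then there exists $\overline{\rho}>0$ such that for every $\rho\ge\overline{\rho}$ the set of global optimal solutions of (P$_\rho$) coincides with the set of global optimal solutions of (P).
   Context: $\mathcal{S}^q$ is the space of real symmetric $q\times q$ matrices with trace inner product $\langle P,Q\rangle=\operatorname{tr}(PQ)$; $\mathcal{S}^q_+$ the positive semidefinite cone; $\mathcal{N}^q$ the entrywise nonnegative matrices in $\mathcal{S}^q$. Given $\overline{C}\in\mathcal{S}^q$, a linear map $\mathcal{A}:\mathcal{S}^q\to\mathbb{R}^m$ and $b\in\mathbb{R}^m$, set $\Omega:=\{Y\in\mathcal{S}^q_+\cap\mathcal{N}^q : \mathcal{A}(Y)=b\}$ and $\mathcal{R}:=\{Y\in\mathcal{S}^q:\operatorname{rank}(Y)\le1\}$. *)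

(* Defs.v *)
(* Real sym_mx matrices over an arbitrary real field R
   (the paper's R is the instance R = reals; the statement is order-algebraic). *)
From HB Require Import structures.
From mathcomp Require Import all_boot all_order all_algebra.
Set Implicit Arguments. Unset Strict Implicit. Unset Printing Implicit Defensive.
Import Order.TTheory GRing.Theory Num.Theory.
Local Open Scope ring_scope.

Definition sym_mx (R : realFieldType) (q : nat) (Y : 'M[R]_q) : Prop := Y^T = Y.

Definition psd (R : realFieldType) (q : nat) (Y : 'M[R]_q) : Prop :=
  forall x : 'cV[R]_q, 0 <= (x^T *m Y *m x) 0 0.

Definition nonneg_mx (R : realFieldType) (q : nat) (Y : 'M[R]_q) : Prop :=
  forall i j, 0 <= Y i j.

Definition tr_inner (R : realFieldType) (q : nat) (P Q : 'M[R]_q) : R := \tr (P *m Q).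

Definition Omega (R : realFieldType) (q m : nat)
  (A : 'M[R]_q -> 'rV[R]_m) (b : 'rV[R]_m) (Y : 'M[R]_q) : Prop :=
  sym_mx Y /\ psd Y /\ nonneg_mx Y /\ A Y = b.

Definition rank_le1 (R : realFieldType) (q : nat) (Y : 'M[R]_q) : Prop :=
  sym_mx Y /\ (\rank Y <= 1)%N.

Definition bounded_set (R : realFieldType) (q : nat) (S : 'M[R]_q -> Prop) : Prop :=
  exists M : R, forall Y, S Y -> forall i j, `|Y i j| <= M.

Definition is_global_min (R : realFieldType) (q : nat)
  (S : 'M[R]_q -> Prop) (f : 'M[R]_q -> R) (Y : 'M[R]_q) : Prop :=
  S Y /\ forall Z, S Z -> f Y <= f Z.

(* Main.v *)
Require Import Defs.
From HB Require Import structures.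
From mathcomp Require Import all_boot all_order all_algebra.
From mathcomp Require Import lra.
From Stdlib Require Import Classical.
Import Order.TTheory GRing.Theory Num.Theory.
Local Open Scope ring_scope.

Lemma tr_bound (R : realFieldType) (q : nat) (C Y : 'M[R]_q) (M : R) :
  (forall i j, `|Y i j| <= M) ->
  `|tr_inner C Y| <= \sum_i \sum_j `|C i j| * M.
Proof.
move=> HY; rewrite /tr_inner /mxtrace.
apply: le_trans (ler_norm_sum _ _ _) _; apply: ler_sum => i _.
rewrite mxE; apply: le_trans (ler_norm_sum _ _ _) _; apply: ler_sum => j _.
by rewrite normrM ler_wpM2l.
Qed.

Theorem theorem4 (R : realFieldType) (q m : nat) (Cbar : 'M[R]_q)
  (A : {linear 'M[R]_q -> 'rV[R]_m}) (b : 'rV[R]_m) :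
  sym_mx Cbar ->
  (exists Y, Omega A b Y) ->
  bounded_set (Omega A b) ->
  ~ Omega A b 0 ->
  (exists Y, Omega A b Y /\ rank_le1 Y) ->
  exists rhobar : R, 0 < rhobar /\
    forall rho : R, rhobar <= rho ->
      forall Y : 'M[R]_q,
        is_global_min (Omega A b) (fun Z => tr_inner Cbar Z + rho * (\rank Z)%:R) Y
        <-> is_global_min (fun Z => Omega A b Z /\ rank_le1 Z) (tr_inner Cbar) Y.
Proof.
move=> _ _ [M HM] H0 [Y0 [HY0 HY0r]].
set K := `|\sum_i \sum_j `|Cbar i j| * M|.
have HK : forall Y, Omega A b Y -> `|tr_inner Cbar Y| <= K.
  move=> Y HY; apply: le_trans (tr_bound _ _ Cbar _ _ (HM Y HY)) _; exact: ler_norm.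
have rk1 : forall Y, Omega A b Y -> rank_le1 Y -> \rank Y = 1%N.
  move=> Y HY [_ HR]; apply/eqP; rewrite eqn_leq HR lt0n mxrank_eq0.
  by apply/eqP => E; apply: H0; rewrite -E.
have rk2 : forall Y, Omega A b Y -> ~ rank_le1 Y -> (2 <= \rank Y)%N.
  move=> Y HY HR; rewrite ltnNge; apply/negP => Hl; apply: HR.
  by split => //; case: HY.
have K0 : 0 <= K by apply: normr_ge0.
exists (2 * K + 1); split; first lra.
move=> rho Hrho Y.
have big : forall Z, Omega A b Z -> (2 <= \rank Z)%N ->
    K + rho < tr_inner Cbar Z + rho * (\rank Z)%:R.
  move=> Z HZ H2.
  have : rho * 2%:R <= rho * (\rank Z)%:R.
    by apply: ler_wpM2l; [lra | rewrite ler_nat].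
  have := HK Z HZ; rewrite ler_norml => /andP [H1 _].
  rewrite -[2%:R]/(1 + 1 : R); lra.
have Y0r := rk1 Y0 HY0 HY0r.
split.
- move=> [HY Hmin].
  have HYr : rank_le1 Y.
    apply: NNPP => Hn.
    have := Hmin Y0 HY0; have := big Y (HY) (rk2 Y HY Hn).
    rewrite Y0r; have := HK Y0 HY0; rewrite ler_norml => /andP [_ H1].
    rewrite mulr1; lra.
  split; first by split.
  move=> Z [HZ HZr]; have := Hmin Z HZ.
  by rewrite (rk1 Y HY HYr) (rk1 Z HZ HZr) lerD2r.
- move=> [[HY HYr] Hmin]; split => // Z HZ.
  rewrite (rk1 Y HY HYr) mulr1.
  case: (classic (rank_le1 Z)) => [HZr|HZn].
  + by rewrite (rk1 Z HZ HZr) mulr1 lerD2r; apply: Hmin.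
  + apply: le_trans (ltW (big Z HZ (rk2 Z HZ HZn))).
    have := HK Y HY; rewrite ler_norml => /andP [_ H1]; lra.
Qed.
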